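(* Let $m\ge 2$, let $\mathcal{A}\in\mathbb{C}^{n_1\times\cdots\times n_m}$ be a nonzero complex tensor, and let $\mathcal{B}\in\mathbb{R}^{2n_1\times\cdots\times 2n_m}$ be the real tensor such that for all $x^{(i)},y^{(i)}\in\mathbb{R}^{n_i}$, writing $u^{(i)}=(x^{(i)},y^{(i)})\in\mathbb{R}^{2n_i}$, $$\langle\mathcal{B},\otimes_{i=1}^m u^{(i)}\rangle=\mathrm{Re}\,\big\langle\mathcal{A},\otimes_{i=1}^m (x^{(i)}+\sqrt{-1}\,y^{(i)})\big\rangle .$$ Suppose $(\hat u^{(1)},\dots,\hat u^{(m-1)})$, $\hat u^{(i)}\in\mathbb{R}^{2n_i}$, is a maximizer of $$\max\ \big\|\langle\mathcal{B},u^{(1)}\otimes\cdots\otimes u^{(m-1)}\rangle\big\|\quad\text{s.t. } u^{(i)}\in\mathbb{R}^{2n_i},\ \|u^{(i)}\|=1,\ i=1,\dots,m-1,$$ and let $\lambda$ be its maximal value. Define $\hat u^{(m)}=\langle\mathcal{B},\hat u^{(1)}\otimes\cdots\otimes\hat u^{(m-1)}\rangle/\lambda\in\mathbb{R}^{2n_m}$, write $\hat u^{(i)}=(\hat x^{(i)},\hat y^{(i)})$ with $\hat x^{(i)},\hat y^{(i)}\in\mathbb{R}^{n_i}$, and set $\hat z^{(i)}=\hat x^{(i)}+\sqrt{-1}\,\hat y^{(i)}$ for $i=1,\dots,m$. Then $\lambda$ is the largest U-eigenvalue of $\mathcal{A}$ and $(\hat z^{(1)},\dots,\hat z^{(m)})$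 is a tuple of U-eigenvectors associated with $\lambda$.
   Context: For complex tensors, $\langle\mathcal{A},\mathcal{C}\rangle=\sum_{i_1,\dots,i_m}\overline{\mathcal{A}_{i_1\cdots i_m}}\,\mathcal{C}_{i_1\cdots i_m}$, and $\otimes_{i=1}^m z^{(i)}$ is the rank-one tensor with entries $z^{(1)}_{i_1}\cdots z^{(m)}_{i_m}$. For the real tensor $\mathcal{B}$, $\langle\mathcal{B},u^{(1)}\otimes\cdots\otimes u^{(m-1)}\rangle$ denotes the vector in $\mathbb{R}^{2n_m}$ with $j$-th component $\sum_{i_1,\dots,i_{m-1}}\mathcal{B}_{i_1\cdots i_{m-1}j}\,u^{(1)}_{i_1}\cdots u^{(m-1)}_{i_{m-1}}$. For $k\in\{1,\dots,m\}$, $\langle \mathcal{A},\otimes_{i=1,i\ne k}^m z^{(i)}\rangle$ denotes the vector in $\mathbb{C}^{n_k}$ whose $i_k$-th component is $\sum_{i_j,\, j\neq k} \overline{\mathcal{A}_{i_1\cdots i_m}}\, \prod_{j\ne k} z^{(j)}_{i_j}$. A real number $\lambda$ is a U-eigenvalue of $\mathcal{A}$, with U-eigenvector tuple $(x^{(1)},\dots,x^{(m)})$, if $x^{(i)}\in\mathbb{C}^{n_i}$, $\|x^{(i)}\|=1$ for all $i$, and $\langle \mathcal{A},\otimes_{i=1,i\ne k}^m x^{(i)}\rangle=\lambda\, \overline{x^{(k)}}$ for every $k=1,\dots,m$ (entrywise complex conjugate on the right). All norms on vectors are Euclidean. *)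

(* Defs.v *)
(* Complex numbers: an arbitrary numClosedFieldType C
   (an algebraically closed field with conjugation and norm, e.g. algC;
   its real elements, x \is Num.real, form a real closed field). *)
From HB Require Import structures.
From mathcomp Require Import all_boot all_order all_algebra.
Set Implicit Arguments. Unset Strict Implicit. Unset Printing Implicit Defensive.
Import Order.TTheory GRing.Theory Num.Theory.
Local Open Scope ring_scope.

Notation MI m d := {dffun forall k : 'I_m, 'I_(d k)}.

Definition dbl (m : nat) (n : 'I_m -> nat) : 'I_m -> nat := fun k => (n k + n k)%N.

Section Defs.
Variable C : numClosedFieldType.

Definition vnorm (I : finType) (v : I -> C) : C := sqrtC (\sum_(i : I) `|v i| ^+ 2).

Definition tfull (m : nat) (d : 'I_m -> nat) (T : MI m d -> C)
  (u : forall k : 'I_m, 'I_(d k) -> C) : C :=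
  \sum_(idx : MI m d) T idx * \prod_(j : 'I_m) u j (idx j).

Definition contr (m : nat) (d : 'I_m -> nat) (T : MI m d -> C)
  (u : forall k : 'I_m, 'I_(d k) -> C) (k : 'I_m) : 'I_(d k) -> C :=
  fun i => \sum_(idx : MI m d | idx k == i) T idx * \prod_(j : 'I_m | j != k) u j (idx j).


Arguments contr {m d} T u k.

Definition tinner (m : nat) (d : 'I_m -> nat) (A : MI m d -> C)
  (z : forall k : 'I_m, 'I_(d k) -> C) : C :=
  tfull (fun idx : MI m d => (A idx)^*) z.

Definition tinner_except (m : nat) (d : 'I_m -> nat) (A : MI m d -> C)
  (z : forall k : 'I_m, 'I_(d k) -> C) (k : 'I_m) : 'I_(d k) -> C :=
  contr (fun idx : MI m d => (A idx)^*) z k.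


Arguments tinner_except {m d} A z k.

Definition cplx (p : nat) (u : 'I_(p + p) -> C) : 'I_p -> C :=
  fun j => u (lshift p j) + 'i * u (rshift p j).

Definition realvec (I : finType) (v : I -> C) : Prop := forall i, v i \is Num.real.

Definition is_U_eigenpair (m : nat) (d : 'I_m -> nat) (A : MI m d -> C)
  (lambda : C) (x : forall k : 'I_m, 'I_(d k) -> C) : Prop :=
  [/\ lambda \is Num.real,
      (forall k, vnorm (x k) = 1) &
      (forall k i, tinner_except A x k i = lambda * (x k i)^*)].

Definition is_U_eigenvalue (m : nat) (d : 'I_m -> nat) (A : MI m d -> C) (lambda : C) : Prop :=
  exists x, is_U_eigenpair A lambda x.

End Defs.

Arguments contr {C m d} T u k.
Arguments tinner_except {C m d} A z k.

Definition last_mode (m : nat) (hm : (0 < m)%N) : 'I_m :=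
  Ordinal (etrans (ltn_predL m) hm).

(* Main.v *)
Require Import Defs.
From HB Require Import structures.
From mathcomp Require Import all_boot all_order all_algebra.
From mathcomp Require Import ring.
Set Implicit Arguments. Unset Strict Implicit. Unset Printing Implicit Defensive.
Import Order.TTheory GRing.Theory Num.Theory.
Local Open Scope ring_scope.

Section Tens.
Variable C : numClosedFieldType.
Variables (m : nat) (d : 'I_m -> nat).
Implicit Types (T : MI m d -> C) (u v : forall k : 'I_m, 'I_(d k) -> C).

Definition upd u k (w : 'I_(d k) -> C) : forall j : 'I_m, 'I_(d j) -> C :=
  @dfwith 'I_m (fun j => 'I_(d j) -> C) u k w.
Arguments upd u k w : clear implicits.

Lemma upd_in u (k : 'I_m) (w : 'I_(d k) -> C) : upd u k w k = w.
Proof. exact: dfwith_in. Qed.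
Lemma upd_out u (k : 'I_m) (w : 'I_(d k) -> C) j : k != j -> upd u k w j = u j.
Proof. exact: dfwith_out. Qed.

Lemma contr_eq T u v k : (forall j, j != k -> forall i, u j i = v j i) ->
  forall i, contr T u k i = contr T v k i.
Proof.
move=> h i; rewrite /contr; apply: eq_bigr => idx _; congr (_ * _).
by apply: eq_bigr => j hj; rewrite h.
Qed.

Lemma tfull_eq T u v : (forall j i, u j i = v j i) -> tfull T u = tfull T v.
Proof.
move=> h; rewrite /tfull; apply: eq_bigr => idx _; congr (_ * _).
by apply: eq_bigr => j _; rewrite h.
Qed.

Lemma tfull_contr T u k : tfull T u = \sum_i contr T u k i * u k i.
Proof.
rewrite /tfull /contr (partition_big (fun idx : MI m d => idx k) predT) //=.
apply: eq_bigr => i _; rewrite big_distrl /=; apply: eq_bigr => idx /eqP hi.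
rewrite (bigD1 k) //= hi.
by rewrite [u k i * _]mulrC mulrA.
Qed.

Lemma tfull_upd T u (k : 'I_m) (w : 'I_(d k) -> C) : tfull T (upd u k w) = \sum_i contr T u k i * w i.
Proof.
rewrite (tfull_contr _ _ k) upd_in; apply: eq_bigr => i _; congr (_ * _).
by apply: contr_eq => j hj i'; rewrite upd_out // eq_sym.
Qed.

End Tens.
Arguments upd {C m d} u k w _.

Section Cx.
Variable C : numClosedFieldType.

Definition realify (p : nat) (v : 'I_p -> C) : 'I_(p + p) -> C :=
  fun i => match split i with inl j => 'Re (v j) | inr j => 'Im (v j) end.

Lemma realify_l p (v : 'I_p -> C) j : realify v (lshift p j) = 'Re (v j).
Proof. by rewrite /realify (@unsplitK p p (inl j)). Qed.
Lemma realify_r p (v : 'I_p -> C) j : realify v (rshift p j) = 'Im (v j).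
Proof. by rewrite /realify (@unsplitK p p (inr j)). Qed.

Lemma realify_real p (v : 'I_p -> C) : realvec (realify v).
Proof. by move=> i; rewrite /realify; case: split => j; rewrite ?Creal_Re ?Creal_Im. Qed.

Lemma cplx_realify p (v : 'I_p -> C) j : cplx (realify v) j = v j.
Proof. by rewrite /cplx realify_l realify_r -Crect. Qed.

Lemma vnorm_realify p (v : 'I_p -> C) : vnorm (realify v) = vnorm v.
Proof.
rewrite /vnorm big_split_ord /= -big_split /=; congr sqrtC; apply: eq_bigr => j _.
by rewrite realify_l realify_r [RHS]normC2_Re_Im (real_normK (Creal_Re _)) (real_normK (Creal_Im _)).
Qed.

Lemma vnorm_cplx p (v : 'I_(p + p) -> C) : realvec v -> vnorm (cplx v) = vnorm v.
Proof.
move=> hv; rewrite /vnorm [in RHS]big_split_ord /= -big_split /=; congr sqrtC.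
apply: eq_bigr => j _.
by rewrite /cplx normC2_rect ?hv // !real_normK ?hv.
Qed.

Lemma Re_lin p (c : 'I_p -> C) (w : 'I_(p + p) -> C) : realvec w ->
  'Re (\sum_j c j * cplx w j) = \sum_i realify (fun j => (c j)^*) i * w i.
Proof.
move=> hw; rewrite raddf_sum big_split_ord /= -big_split /=; apply: eq_bigr => j _.
rewrite realify_l realify_r Re_conj Im_conj /cplx mulrDr raddfD /= ReMr ?hw //.
by rewrite mulrCA ReMil ImMr ?hw // mulNr.
Qed.

Lemma sum_delta (I : finType) (F : I -> C) i0 :
  \sum_i F i * (i == i0)%:R = F i0.
Proof.
rewrite (bigD1 i0) //= eqxx mulr1 big1 ?addr0 // => i /negbTE ->.
by rewrite mulr0.
Qed.

Lemma delta_real (I : finType) (i0 : I) : realvec (fun i => (i == i0)%:R : C).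
Proof. by move=> i; case: (i == i0); rewrite ?rpred0 ?rpred1. Qed.

Lemma vnorm_ge0 (I : finType) (g : I -> C) : 0 <= vnorm g.
Proof. by rewrite sqrtC_ge0 sumr_ge0 // => i _; rewrite exprn_ge0. Qed.

Lemma vnorm_sq (I : finType) (g : I -> C) : vnorm g ^+ 2 = \sum_i `|g i| ^+ 2.
Proof. exact: sqrtCK. Qed.

Lemma vnorm1 (I : finType) (g : I -> C) : vnorm g = 1 -> \sum_i `|g i| ^+ 2 = 1.
Proof. by move=> h; rewrite -vnorm_sq h expr1n. Qed.

Lemma vnorm0 (I : finType) (g : I -> C) : vnorm g = 0 -> forall i, g i = 0.
Proof.
move=> h i; have /psumr_eq0P h2 : \sum_i `|g i| ^+ 2 = 0 by rewrite -vnorm_sq h expr0n.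
have := h2 (fun i _ => exprn_ge0 2 (normr_ge0 (g i))) i isT.
by move/eqP; rewrite sqrf_eq0 normr_eq0 => /eqP.
Qed.

Lemma sq_expand (I : finType) (g v : I -> C) a : realvec g -> realvec v -> a \is Num.real ->
  \sum_i `|g i - a * v i| ^+ 2 =
  \sum_i `|g i| ^+ 2 - 2%:R * a * \sum_i g i * v i + a ^+ 2 * \sum_i `|v i| ^+ 2.
Proof.
move=> hg hv ha.
have e : forall i, `|g i - a * v i| ^+ 2 =
   `|g i| ^+ 2 - 2%:R * a * (g i * v i) + a ^+ 2 * `|v i| ^+ 2.
  move=> i; rewrite !real_normK ?rpredB ?rpredM ?hg ?hv //; ring.
rewrite (eq_bigr _ (fun i _ => e i)) big_split /= sumrB -!mulr_sumr.
by [].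
Qed.

Lemma CS1 (I : finType) (g v : I -> C) : realvec g -> realvec v ->
  \sum_i `|v i| ^+ 2 = 1 -> \sum_i g i * v i <= vnorm g.
Proof.
move=> hg hv hv1; set a := vnorm g; set S := \sum_i g i * v i.
have a0 : 0 <= a := vnorm_ge0 g.
have aR : a \is Num.real := ger0_real a0.
have SR : S \is Num.real by apply: rpred_sum => i _; rewrite rpredM ?hg ?hv.
have := sq_expand hg hv aR; rewrite hv1 mulr1 -(vnorm_sq g) -/a -/S => e.
have h0 : 0 <= 2%:R * a * (a - S).
  have -> : 2%:R * a * (a - S) = a ^+ 2 - 2%:R * a * S + a ^+ 2 by ring.
  by rewrite -e sumr_ge0 // => i _; rewrite exprn_ge0.
have [az|anz] := eqVneq a 0.
  have g0 := vnorm0 az.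
  rewrite /S big1 ?az // => i _; by rewrite g0 mul0r.
have a2 : 0 < 2%:R * a by rewrite mulr_gt0 // lt_def anz a0.
by move: h0; rewrite pmulr_rge0 // subr_ge0.
Qed.

Lemma KKT (I : finType) (g v : I -> C) lam : realvec g -> realvec v -> 0 < lam ->
  \sum_i `|v i| ^+ 2 = 1 ->
  (forall w : I -> C, realvec w -> \sum_i `|w i| ^+ 2 = 1 -> \sum_i g i * w i <= lam) ->
  \sum_i g i * v i = lam -> forall i, g i = lam * v i.
Proof.
move=> hg hv lam0 hv1 hmax hgv.
set a := vnorm g.
have a0 : 0 <= a := vnorm_ge0 g.
have aR : a \is Num.real := ger0_real a0.
have lamR : lam \is Num.real := gtr0_real lam0.
have ale : a <= lam.
  have [az|anz] := eqVneq a 0; first by rewrite az ltW.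
  have ainv : a \is a GRing.unit by rewrite unitfE.
  set w := fun i => g i / a.
  have wR : realvec w by move=> i; rewrite /w rpredM ?rpredV ?hg.
  have w1 : \sum_i `|w i| ^+ 2 = 1.
    rewrite /w (eq_bigr (fun i => `|g i| ^+ 2 / a ^+ 2)); last first.
      by move=> i _ /=; rewrite normrM normfV (ger0_norm a0) exprMn exprVn.
    by rewrite -mulr_suml -vnorm_sq divff // expf_neq0.
  have := hmax w wR w1.
  rewrite /w (eq_bigr (fun i => `|g i| ^+ 2 / a)); last first.
    by move=> i _ /=; rewrite mulrA -expr2 real_normK ?hg.
  by rewrite -mulr_suml -vnorm_sq -/a expr2 mulrK.
have a2 : a ^+ 2 <= lam ^+ 2 by rewrite !expr2 ler_pM.
have := sq_expand hg hv lamR; rewrite hv1 mulr1 hgv -(vnorm_sq g) -/a => e.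
have s0 : \sum_i `|g i - lam * v i| ^+ 2 = 0.
  apply/le_anti; rewrite sumr_ge0 ?andbT; last by move=> i _; rewrite exprn_ge0.
  rewrite e.
  have -> : a ^+ 2 - 2%:R * lam * lam + lam ^+ 2 = a ^+ 2 - lam ^+ 2 by ring.
  by rewrite subr_le0.
move=> i; have := psumr_eq0P (fun i _ => exprn_ge0 2 (normr_ge0 _)) s0 (i := i) isT.
by move/eqP; rewrite sqrf_eq0 normr_eq0 subr_eq0 => /eqP.
Qed.

End Cx.

Lemma contr_real (C : numClosedFieldType) m (d : 'I_m -> nat) (T : MI m d -> C)
  (hT : forall idx, T idx \is Num.real) (u : forall k : 'I_m, 'I_(d k) -> C) k :
  (forall j, j != k -> realvec (u j)) -> realvec (contr T u k).
Proof.
move=> hu i; apply: rpred_sum => idx _; rewrite rpredM ?hT //.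
by apply: rpred_prod => j hj; apply: hu.
Qed.

Section Main.
Variables (C : numClosedFieldType) (m : nat) (n : 'I_m -> nat)
  (A : MI m n -> C) (B : MI m (dbl n) -> C).
Hypothesis hBreal : forall idx, B idx \is Num.real.
Hypothesis hB : forall u : forall k : 'I_m, 'I_(dbl n k) -> C,
          (forall k, realvec (u k)) ->
          tfull B u = 'Re (tinner A (fun k => cplx (u k))).

Lemma bridge (u : forall k : 'I_m, 'I_(dbl n k) -> C) (hu : forall k, realvec (u k)) k j :
  tinner_except A (fun k => cplx (u k)) k j = (cplx (contr B u k) j)^*.
Proof.
set c := tinner_except A (fun k => cplx (u k)) k.
have gE : forall i, contr B u k i = realify (fun j => (c j)^*) i.
  move=> i0.
  pose v : 'I_(dbl n k) -> C := fun i => (i == i0)%:R.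
  have hv : realvec v := @delta_real C _ i0.
  have hr : forall j, realvec (upd u k v j).
    move=> j'; case: (eqVneq k j') => [e|ne]; last by rewrite upd_out.
    by subst j'; rewrite upd_in.
  have := hB hr; rewrite tfull_upd sum_delta => ->.
  rewrite /tinner (@tfull_eq _ _ _ _ _ (upd (fun k => cplx (u k)) k (cplx v))); last first.
    move=> j'; case: (eqVneq k j') => [e|ne]; last by move=> i; rewrite !upd_out.
    by subst j' => i; rewrite !upd_in.
  rewrite tfull_upd.
  by rewrite (Re_lin c hv) sum_delta.
have -> : cplx (contr B u k) j = (c j)^*.
  by rewrite /cplx !gE -[RHS](cplx_realify (fun j => (c j)^*)).
by rewrite conjCK.
Qed.

Lemma normbound (k0 : 'I_m) (lam : C)
  (hmax : forall u : forall k : 'I_m, 'I_(dbl n k) -> C,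
      (forall k, k != k0 -> realvec (u k)) ->
      (forall k, k != k0 -> vnorm (u k) = 1) ->
      vnorm (contr B u k0) <= lam)
  (z : forall k : 'I_m, 'I_(n k) -> C) (hz : forall k, vnorm (z k) = 1) :
  `|tinner A z| <= lam.
Proof.
set f := tinner A z.
pose w : C := if f == 0 then 1 else `|f| / f.
have wf : w * f = `|f|.
  rewrite /w; case: eqP => [->|/eqP fn]; first by rewrite mulr0 normr0.
  by rewrite divfK.
have w1 : `|w| = 1.
  rewrite /w; case: eqP => [_|/eqP fn]; first by rewrite normr1.
  by rewrite normrM normfV normr_id divff // normr_eq0.
pose z' := fun j (i : 'I_(n j)) => (if j == k0 then w else 1) * z j i.
have ef : tinner A z' = `|f|.
  rewrite -wf /f /tinner (tfull_contr _ _ k0) [in RHS](tfull_contr _ _ k0) mulr_sumr.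
  apply: eq_bigr => i _; rewrite /z' eqxx mulrCA; congr (_ * (_ * _)).
  by apply: contr_eq => j hj i'; rewrite (negbTE hj) mul1r.
have nz' : forall k, vnorm (z' k) = 1.
  move=> k; rewrite -(hz k) /vnorm; congr sqrtC; apply: eq_bigr => i _.
  by rewrite /z'; case: (k == k0); rewrite normrM ?w1 ?normr1 mul1r.
pose u := fun j => realify (z' j) : 'I_(dbl n j) -> C.
have uR : forall k, realvec (u k) by move=> k; apply: realify_real.
have := hB uR.
rewrite /tinner (@tfull_eq _ _ _ _ _ z'); last by move=> j i; rewrite /u cplx_realify.
rewrite -/(tinner A z') ef (Creal_ReP _ (normr_real _)) => <-.
rewrite (tfull_contr _ _ k0).
apply: le_trans (CS1 _ _ _) (hmax u _ _).
- by apply: contr_real => // j _; apply: uR.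
- exact: uR.
- by apply: vnorm1; rewrite /u vnorm_realify.
- by move=> k _; apply: uR.
- by move=> k _; rewrite /u vnorm_realify.
Qed.

End Main.

Lemma delta_tinner (C : numClosedFieldType) m (n : 'I_m -> nat) (A : MI m n -> C) (idx : MI m n) :
  tinner A (fun k i => (i == idx k)%:R) = (A idx)^*.
Proof.
rewrite /tinner /tfull (bigD1 idx) //= big1 ?mulr1; last first.
  by move=> j _; rewrite eqxx.
rewrite big1 ?addr0 // => idx' hne.
have [j hj] : exists j, idx' j != idx j.
  case: (pickP (fun j => idx' j != idx j)) => [j hj|h]; first by exists j.
  exfalso; move/eqP: hne; apply; apply/ffunP => j.
  by have := h j => /negbFE /eqP.
by rewrite (bigD1 j) //= (negbTE hj) mul0r mulr0.
Qed.

Lemma delta_vnorm (C : numClosedFieldType) p (i0 : 'I_p) :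
  vnorm (fun i => (i == i0)%:R : C) = 1.
Proof.
rewrite /vnorm (bigD1 i0) //= eqxx normr1 expr1n big1 ?addr0 ?sqrtC1 //.
by move=> i /negbTE ->; rewrite normr0 expr0n.
Qed.

Theorem theorem3p2 (C : numClosedFieldType) (m : nat) (hm : (2 <= m)%N)
  (n : 'I_m -> nat)
  (A : MI m n -> C) (hA : exists idx, A idx != 0)
  (B : MI m (dbl n) -> C) (hBreal : forall idx, B idx \is Num.real)
  (hB : forall u : forall k : 'I_m, 'I_(dbl n k) -> C,
          (forall k, realvec (u k)) ->
          tfull B u = 'Re (tinner A (fun k => cplx (u k))))
  (uh : forall k : 'I_m, 'I_(dbl n k) -> C)
  (huh_real : forall k, k != last_mode (ltnW hm) -> realvec (uh k))
  (huh_norm : forall k, k != last_mode (ltnW hm) -> vnorm (uh k) = 1)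
  (huh_max : forall u : forall k : 'I_m, 'I_(dbl n k) -> C,
      (forall k, k != last_mode (ltnW hm) -> realvec (u k)) ->
      (forall k, k != last_mode (ltnW hm) -> vnorm (u k) = 1) ->
      vnorm (contr B u (last_mode (ltnW hm))) <= vnorm (contr B uh (last_mode (ltnW hm))))
  (lambda : C) (hlambda : lambda = vnorm (contr B uh (last_mode (ltnW hm))))
  (zh : forall k : 'I_m, 'I_(n k) -> C)
  (hzh : forall k, k != last_mode (ltnW hm) -> zh k = cplx (uh k))
  (hzh_last : zh (last_mode (ltnW hm)) =
     cplx (fun i => contr B uh (last_mode (ltnW hm)) i / lambda)) :
  is_U_eigenpair A lambda zh /\
  (forall mu, is_U_eigenvalue A mu -> mu <= lambda).
Proof.
set k0 := last_mode (ltnW hm) in huh_real huh_norm huh_max hlambda hzh hzh_last *.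
have hmax : forall u : forall k : 'I_m, 'I_(dbl n k) -> C,
      (forall k, k != k0 -> realvec (u k)) ->
      (forall k, k != k0 -> vnorm (u k) = 1) ->
      vnorm (contr B u k0) <= lambda.
  by move=> u h1 h2; rewrite hlambda; apply: huh_max.
have L1 := normbound hBreal hB hmax.
have lam0 : 0 < lambda.
  case: hA => idx hidx.
  apply: (lt_le_trans _ (L1 _ (fun k => @delta_vnorm C _ (idx k)))).
  by rewrite delta_tinner norm_conjC normr_gt0.
have lamR : lambda \is Num.real := gtr0_real lam0.
have lamn0 : lambda != 0 by rewrite gt_eqF.
set g0 := contr B uh k0.
have g0R : realvec g0 by apply: contr_real.
pose um := fun i => g0 i / lambda.
pose uh' := upd uh k0 um.
have umR : realvec um by move=> i; rewrite /um rpredM ?rpredV.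
have uh'R : forall k, realvec (uh' k).
  move=> k; case: (eqVneq k0 k) => [e|ne].
    by subst k; rewrite /uh' upd_in.
  by rewrite /uh' upd_out //; apply: huh_real; rewrite eq_sym.
have sg0 : \sum_i `|g0 i| ^+ 2 = lambda ^+ 2 by rewrite hlambda vnorm_sq.
have um1 : \sum_i `|um i| ^+ 2 = 1.
  rewrite /um (eq_bigr (fun i => `|g0 i| ^+ 2 / lambda ^+ 2)); last first.
    by move=> i _; rewrite normrM normfV (gtr0_norm lam0) exprMn exprVn.
  by rewrite -mulr_suml sg0 divff // expf_neq0.
have uh'1 : forall k, vnorm (uh' k) = 1.
  move=> k; case: (eqVneq k0 k) => [e|ne].
    by subst k; rewrite /uh' upd_in /vnorm um1 sqrtC1.
  by rewrite /uh' upd_out // huh_norm // eq_sym.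
have cB0 : forall i, contr B uh' k0 i = g0 i.
  by apply: contr_eq => j hj i; rewrite /uh' upd_out // eq_sym.
have tB : tfull B uh' = lambda.
  rewrite (tfull_contr _ _ k0) (eq_bigr (fun i => `|g0 i| ^+ 2 / lambda)); last first.
    move=> i _; rewrite cB0 /uh' upd_in /um mulrA -expr2 real_normK //.
  by rewrite -mulr_suml sg0 expr2 mulrK // unitfE.
have eig : forall k i, contr B uh' k i = lambda * uh' k i.
  move=> k; case: (eqVneq k0 k) => [e|ne].
    by subst k => i; rewrite cB0 /uh' upd_in /um mulrC divfK.
  apply: KKT => //.
  - by apply: contr_real => // j _; apply: uh'R.
  - by apply: vnorm1.
  - move=> w wR w1.
    rewrite -tfull_upd (tfull_contr _ _ k0).
    have e0 : upd uh' k w k0 = um.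
      by rewrite upd_out; [rewrite /uh' upd_in | rewrite eq_sym].

    rewrite e0; apply: le_trans (CS1 _ _ um1) (hmax _ _ _).
    + by apply: contr_real => // j hj; case: (eqVneq k j) => [e|ne2];
        [subst j; rewrite upd_in | rewrite upd_out].
    + by [].
    + by move=> j hj; case: (eqVneq k j) => [e|ne2];
        [subst j; rewrite upd_in | rewrite upd_out].
    + move=> j hj; case: (eqVneq k j) => [e|ne2].
        by subst j; rewrite upd_in /vnorm w1 sqrtC1.
      by rewrite upd_out.
  - by rewrite -(tfull_contr _ _ k).
have zhE : forall k i, zh k i = cplx (uh' k) i.
  move=> k; case: (eqVneq k0 k) => [e|ne].
    by subst k; rewrite hzh_last /uh' upd_in.
  by rewrite hzh ?(eq_sym k) // /uh' upd_out.
split.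
  split => //.
    move=> k; rewrite -(uh'1 k) -(vnorm_cplx (uh'R k)) /vnorm; congr sqrtC.
    by apply: eq_bigr => i _; rewrite zhE.
  move=> k i.
  rewrite /tinner_except (@contr_eq _ _ _ _ _ (fun k => cplx (uh' k))); last first.
    by move=> j _ i'; rewrite zhE.
  rewrite -/(tinner_except A (fun k => cplx (uh' k)) k i) (bridge hB uh'R).
  have -> : cplx (contr B uh' k) i = lambda * cplx (uh' k) i.
    by rewrite /cplx !eig mulrDr mulrCA.
  by rewrite rmorphM /= conj_Creal // zhE.
move=> mu [x [muR xn xe]].
have fmu : tinner A x = mu.
  rewrite /tinner (tfull_contr _ _ k0).
  rewrite (eq_bigr (fun i => mu * `|x k0 i| ^+ 2)); last first.
    by move=> i _; rewrite -/(tinner_except A x k0 i) xe normCKC mulrA.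
  by rewrite -mulr_sumr (vnorm1 (xn k0)) mulr1.
by rewrite -fmu; apply: le_trans (real_ler_norm _) (L1 _ xn); rewrite fmu.
Qed.
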